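(* Let $K\ge1$ be an integer and $t_1,t_2\in\mathbb C$. Let $A$ be the $2K\times2K$ matrix with entries \[ A_{i,j}=\frac{1}{2\pi i}\oint_{|u|=2}\frac{u^{i+j-2}\exp\left(\frac{t_1}{u-1}+\frac{t_2}{u+1}\right)}{(u-1)^K}\,du\quad(1\le i\le K,\ 1\le j\le 2K), \] \[ A_{K+i,j}=\frac{1}{2\pi i}\oint_{|u|=2}\frac{u^{i+j-2}\exp\left(\frac{t_1}{u-1}+\frac{t_2}{u+1}\right)}{(u+1)^K}\,du\quad(1\le i\le K,\ 1\le j\le 2K). \] Then $\det A=(-2)^{K^2}$; in particular $\det A$ is independent of $t_1$ and $t_2$.
   Context: The circle $|u|=2$ is positively oriented. *)

(* Defs.v *)
From Stdlib Require Import Reals List ClassicalEpsilon.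
Open Scope R_scope.

Definition Cx : Type := (R * R)%type.
Definition Cre (z : Cx) : R := fst z.
Definition Cim (z : Cx) : R := snd z.
Definition RtoC (x : R) : Cx := (x, 0).
Definition C0 : Cx := (0, 0).
Definition C1 : Cx := (1, 0).
Definition Ci : Cx := (0, 1).
Definition Cadd (z w : Cx) : Cx := (fst z + fst w, snd z + snd w).
Definition Copp (z : Cx) : Cx := (- fst z, - snd z).
Definition Csub (z w : Cx) : Cx := Cadd z (Copp w).
Definition Cmul (z w : Cx) : Cx :=
  (fst z * fst w - snd z * snd w, fst z * snd w + snd z * fst w).
Definition Cinv (z : Cx) : Cx :=
  let d := fst z * fst z + snd z * snd z in (fst z / d, - snd z / d).
Definition Cdiv (z w : Cx) : Cx := Cmul z (Cinv w).
Fixpoint Cpow (z : Cx) (n : nat) : Cx :=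
  match n with O => C1 | S m => Cmul z (Cpow z m) end.
Definition Cexp (z : Cx) : Cx := (exp (fst z) * cos (snd z), exp (fst z) * sin (snd z)).

(* Riemann integral of a real function on [a,b] (0 if not Riemann integrable;
   the value of RiemannInt does not depend on the integrability proof). *)
Definition RInt (f : R -> R) (a b : R) : R :=
  match excluded_middle_informative (inhabited (Riemann_integrable f a b)) with
  | left h => RiemannInt (epsilon h (fun _ => True))
  | right _ => 0
  end.

Definition gam (th : R) : Cx := (2 * cos th, 2 * sin th).
Definition dgam (th : R) : Cx := (- 2 * sin th, 2 * cos th).

Definition circle2_integral (f : Cx -> Cx) : Cx :=
  let g := fun th => Cmul (f (gam th)) (dgam th) in
  (RInt (fun th => fst (g th)) 0 (2 * PI), RInt (fun th => snd (g th)) 0 (2 * PI)).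

Definition cauchy_int2 (f : Cx -> Cx) : Cx :=
  Cdiv (circle2_integral f) (Cmul (RtoC (2 * PI)) Ci).

(* Finite sums and determinants of square matrices given as functions
   nat -> nat -> Cx, indices 0 .. n-1. *)
Definition Csum (n : nat) (f : nat -> Cx) : Cx :=
  fold_right Cadd C0 (map f (seq 0 n)).

Definition minor0 (M : nat -> nat -> Cx) (j : nat) : nat -> nat -> Cx :=
  fun i k => M (S i) (if Nat.ltb k j then k else S k).

Fixpoint det (n : nat) (M : nat -> nat -> Cx) : Cx :=
  match n with
  | O => C1
  | S m => Csum n (fun j => Cmul (Cmul (Cpow (Copp C1) j) (M 0%nat j))
                                 (det m (minor0 M j)))
  end.

Definition weight (t1 t2 u : Cx) : Cx :=
  Cexp (Cadd (Cdiv t1 (Csub u C1)) (Cdiv t2 (Cadd u C1))).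

(* The 2K x 2K matrix A, 0-based indices: for i < K,
   A i j = (1/2 pi i) oint u^(i+j) w(u) / (u-1)^K du, and for K <= i < 2K,
   A i j = (1/2 pi i) oint u^((i-K)+j) w(u) / (u+1)^K du.
   (1-based exponent i+j-2 becomes the 0-based i+j.) *)
Definition Amat (K : nat) (t1 t2 : Cx) (i j : nat) : Cx :=
  if Nat.ltb i K then
    cauchy_int2 (fun u => Cdiv (Cmul (Cpow u (i + j)) (weight t1 t2 u))
                               (Cpow (Csub u C1) K))
  else
    cauchy_int2 (fun u => Cdiv (Cmul (Cpow u (i - K + j)) (weight t1 t2 u))
                               (Cpow (Cadd u C1) K)).

(* Main.v *)
Require Import Defs.
From Stdlib Require Import Reals List ClassicalEpsilon.
Open Scope R_scope.

From Stdlib Require Import Lra Lia FunctionalExtensionality.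
From Coquelicot Require Coquelicot.
From mathcomp Require all_boot all_algebra.
From mathcomp Require Rstruct complex.
From mathcomp Require ring zify.
Import Defs.


Definition gfun (K : nat) (t1 t2 : Cx) (m j : nat) (u : Cx) : Cx :=
  Cdiv (Cmul (Cmul (Cpow (Csub u C1) m) (Cpow u j)) (weight t1 t2 u))
       (Cmul (Cpow (Csub u C1) K) (Cpow (Cadd u C1) K)).

Definition Earg (t1 t2 z : Cx) : Cx :=
  Cadd (Cdiv (Cmul t1 z) (Csub C1 z)) (Cdiv (Cmul t2 z) (Cadd C1 z)).

Definition qfun (K : nat) (t1 t2 : Cx) (m d : nat) (z : Cx) : Cx :=
  Cdiv (Cmul (Cmul (Cpow (Csub C1 z) m) (Cpow z d)) (Cexp (Earg t1 t2 z)))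
       (Cmul (Cpow (Csub C1 z) K) (Cpow (Cadd C1 z) K)).

Definition nz (z : Cx) := fst z * fst z + snd z * snd z <> 0.
Definition P1 (u : Cx) := 1 < fst u * fst u + snd u * snd u.

Lemma P1_not (u : Cx) : P1 u -> u <> C0 /\ Csub u C1 <> C0 /\ Cadd u C1 <> C0.
Proof. destruct u as [a b]; unfold P1, Csub, Cadd, Copp, C1, C0; simpl; intros h.
 repeat split; intro e; injection e; intros; nra. Qed.
Lemma Cexp0 : Cexp C0 = C1.
Proof. unfold Cexp, C0, C1; simpl. rewrite exp_0, cos_0, sin_0. f_equal; ring. Qed.

Definition Aint (K : nat) (t1 t2 : Cx) (i j : nat) (u : Cx) : Cx :=
  if Nat.ltb i K then Cdiv (Cmul (Cpow u (i + j)) (weight t1 t2 u)) (Cpow (Csub u C1) K)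
  else Cdiv (Cmul (Cpow u (i - K + j)) (weight t1 t2 u)) (Cpow (Cadd u C1) K).

Lemma Amat_Aint K t1 t2 i j : Amat K t1 t2 i j = cauchy_int2 (Aint K t1 t2 i j).
Proof. unfold Amat, Aint. destruct (Nat.ltb i K); reflexivity. Qed.
Lemma RtoC_m2 : RtoC (-2) = Copp (Cadd C1 C1).
Proof. unfold RtoC, Copp, Cadd, C1; simpl; f_equal; lra. Qed.

Module MC.
Import mathcomp.boot.all_boot mathcomp.algebra.all_algebra.
Import mathcomp.reals_stdlib.Rstruct mathcomp.real_closed.complex.
Import mathcomp.zify.zify.
Local Set Implicit Arguments. Local Unset Strict Implicit. Local Unset Printing Implicit Defensive.
Import GRing.Theory Num.Theory.
Import mathcomp.algebra_tactics.ring.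
Local Open Scope ring_scope.
Local Open Scope complex_scope.


Notation CC := (Rdefinitions.R[i]).
Definition phi (z : Cx) : CC := (fst z) +i* (snd z).

Lemma phi_inj z w : phi z = phi w -> z = w.
Proof. case: z => a b; case: w => c d; rewrite /phi /=; case=> -> ->; done. Qed.

Lemma phi_add z w : phi (Cadd z w) = phi z + phi w.
Proof. by case: z => a b; case: w. Qed.
Lemma phi_opp z : phi (Copp z) = - phi z.
Proof. by case: z. Qed.
Lemma phi_sub z w : phi (Csub z w) = phi z - phi w.
Proof. by rewrite /Csub phi_add phi_opp. Qed.
Lemma phi_mul z w : phi (Cmul z w) = phi z * phi w.
Proof. by case: z => a b; case: w. Qed.
Lemma phi_C0 : phi C0 = 0. Proof. by []. Qed.
Lemma phi_C1 : phi C1 = 1. Proof. by []. Qed.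
Lemma phi_inv z : phi (Cinv z) = (phi z)^-1.
Proof. case: z => a b; rewrite /phi /Cinv /=. congr (_ +i* _).
by rewrite !RealsE mulNr.
Qed.

Lemma phi_div z w : phi (Cdiv z w) = phi z / phi w.
Proof. by rewrite /Cdiv phi_mul phi_inv. Qed.
Lemma phi_pow z n : phi (Cpow z n) = phi z ^+ n.
Proof. elim: n => [|n IH] //=. by rewrite phi_mul IH exprS. Qed.
Lemma phi_RtoC x : phi (RtoC x) = x%:C.
Proof. by []. Qed.

Lemma phi_Csum_gen n s F : phi (fold_right Cadd C0 (map F (List.seq s n))) = \sum_(j < n) phi (F (s + j)%N).
Proof. elim: n s => [|n IH] s /=. by rewrite big_ord0.
 rewrite phi_add IH big_ord_recl addn0. congr (_ + _). apply: eq_bigr => i _.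
 by rewrite /= addSnnS. Qed.

Lemma phi_Csum n F : phi (Csum n F) = \sum_(j < n) phi (F j).
Proof. by rewrite /Csum phi_Csum_gen. Qed.

Lemma ltb_ltn k j : Nat.ltb k j = (k < j)%N.
Proof. case: (ltnP k j) => H.
 - apply Nat.ltb_lt; apply/ltP; exact H.
 - apply Nat.ltb_ge; apply/leP; exact H. Qed.

Definition mx_of n (M : nat -> nat -> Cx) : 'M[CC]_n := \matrix_(i < n, j < n) phi (M i j).

Lemma phi_det n M : phi (det n M) = \det (mx_of n M).
Proof. elim: n M => [|n IH] M. by rewrite det_mx00.
 rewrite (expand_det_row _ ord0) /= phi_Csum. apply: eq_bigr => j _.
 rewrite !phi_mul phi_pow phi_opp phi_C1 IH /cofactor /mx_of mxE add0n.
 rewrite -mulrA mulrC -mulrA. congr (_ * _). rewrite mulrC. congr (_ * _).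
 congr (\det _). apply/matrixP => i k; rewrite !mxE /minor0 ltb_ltn /=.
 congr (phi (M _ _)). rewrite /bump. by case: ltnP => H; rewrite ?add0n ?add1n.
Qed.


Lemma Earg_inv (t1 t2 u : Cx) : phi u != 0 -> phi u - 1 != 0 -> phi u + 1 != 0 ->
  Earg t1 t2 (Cinv u) = Cadd (Cdiv t1 (Csub u C1)) (Cdiv t2 (Cadd u C1)).
Proof. move=> h0 h1 h2. apply: phi_inj.
 rewrite /Earg !(phi_add, phi_div, phi_mul, phi_sub, phi_inv, phi_C1).
 have e1 : 1 - (phi u)^-1 = (phi u - 1) / phi u by field.
 have e2 : 1 + (phi u)^-1 = (phi u + 1) / phi u by field.
 rewrite e1 e2. field. by rewrite h0 h1 h2.
Qed.

Lemma q_g_id K t1 t2 m j d (u : Cx) : (m + j + 1 + d = K + K)%N ->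
  phi u != 0 -> phi u - 1 != 0 -> phi u + 1 != 0 ->
  qfun K t1 t2 m d (Cinv u) = Cmul u (gfun K t1 t2 m j u).
Proof. move=> hK h0 h1 h2. rewrite /qfun /gfun Earg_inv // /weight.
 apply: phi_inj.
 rewrite !(phi_add, phi_div, phi_mul, phi_sub, phi_inv, phi_C1, phi_pow).
 set E := phi (Cexp _).
 set v := phi u.
 have e1 : 1 - v^-1 = (v - 1) / v by field.
 have e2 : 1 + v^-1 = (v + 1) / v by field.
 rewrite e1 e2 !expr_div_n exprVn.
 have hW : v ^+ K * v ^+ K = v ^+ m * v ^+ d * (v * v ^+ j).
 { rewrite -!exprD -exprS -!exprD; congr (_ ^+ _); lia. }
 have nA : (v - 1) ^+ K != 0 by rewrite expf_neq0.
 have nB : (v + 1) ^+ K != 0 by rewrite expf_neq0.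
 have nW : v ^+ K != 0 by rewrite expf_neq0.
 have nm : v ^+ m != 0 by rewrite expf_neq0.
 have nd : v ^+ d != 0 by rewrite expf_neq0.
 transitivity ((v - 1) ^+ m * E * (v ^+ K * v ^+ K) / (v ^+ m * v ^+ d * (v - 1) ^+ K * (v + 1) ^+ K)).
 { field. by rewrite nA nB nW nm nd. }
 rewrite hW. field. by rewrite ?nA ?nB ?nW ?nm ?nd ?h0.
Qed.


Fixpoint sgn (n : nat) : CC := match n with 0%N => 1 | S m => (-1) ^+ m * sgn m end.

Lemma anti_det n (M : 'M[CC]_n) :
  (forall i j : 'I_n, (i + j < n.-1)%N -> M i j = 0) ->
  (forall i j : 'I_n, (i + j = n.-1)%N -> M i j = 1) -> \det M = sgn n.
Proof.
 elim: n M => [|n IH] M h0 h1. by rewrite det_mx00.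
 rewrite (expand_det_row _ ord0) (bigD1 ord_max) //= big1.
 - rewrite addr0 h1 /= ?add0n // mul1r /cofactor add0n /=. congr (_ * _).
   apply: IH => i j hij; rewrite !mxE.
   + apply: h0. rewrite /= /bump /= (leqNgt n j) (ltn_ord j) /=. lia.
   + apply: h1. rewrite /= /bump /= (leqNgt n j) (ltn_ord j) /=.
     have := ltn_ord i. lia.
 - move=> j hj. rewrite h0 ?mul0r //= add0n.
   have := ltn_ord j. move: hj. case: j => j hj' /= hne hj.
   have : j != n. { apply: contraNneq hne => e. by rewrite -val_eqE /= e. }
   lia.
Qed.

Lemma sgn_double K : sgn (K + K) = (-1) ^+ K.
Proof. elim: K => [|K IH] //. rewrite addSn addnS /= IH -!exprD exprS.
 rewrite -exprS -[LHS]signr_odd -[RHS]signr_odd; congr (_ ^+ _).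
 rewrite /= !oddD. by case: (odd K).
Qed.


Definition c2 : CC := 2%:R.
Definition Tp (K i : nat) : {poly CC} :=
  if (i < K)%N then ('X + 1) ^+ i * ('X + c2%:P) ^+ K else ('X + 1) ^+ (i - K) * 'X^K.
Definition Tmx (K : nat) : 'M[CC]_(K + K) := \matrix_(i, m) (Tp K i)`_m.

Lemma coefX1 i k : (('X + 1 : {poly CC}) ^+ i)`_k = ('C(i, k))%:R.
Proof. rewrite exprD1n coef_sum.
 under eq_bigr => l _ do rewrite coefMn coefXn.
 case: (leqP k i) => hk.
 - rewrite (bigD1 (Ordinal (hk : (k < i.+1)%N))) //= eqxx big1 ?addr0 //.
   move=> l hl. have -> : (k == l :> nat) = false.
   { apply/negP => /eqP e. move: hl. apply/negP; rewrite negbK. apply/eqP. by apply: val_inj. }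
   by rewrite mul0rn.
 - rewrite bin_small // big1 // => l _. have -> : (k == l :> nat) = false.
   { apply/negP => /eqP e. have := ltn_ord l. lia. }
   by rewrite mul0rn.
Qed.

Lemma Tmx_dl K : dlsubmx (Tmx K) = 0.
Proof. apply/matrixP => i j; rewrite !mxE /Tp /=.
 have -> : (K + i < K)%N = false by lia.
 by rewrite coefMXn ltn_ord. Qed.

Lemma Tmx_dr K : \det (drsubmx (Tmx K)) = 1.
Proof. have E : forall i k : 'I_K, drsubmx (Tmx K) i k = ('C(i, k))%:R.
 { move=> i k; rewrite !mxE /Tp /=.
   have -> : (K + i < K)%N = false by lia.
   rewrite coefMXn. have -> : (K + k < K)%N = false by lia.
   by rewrite !addKn coefX1. }
 rewrite det_trig.
 - by apply: big1 => i _; rewrite E binn.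
 - apply/is_trig_mxP => i k hik. by rewrite E bin_small.
Qed.

Definition Lmx K : 'M[CC]_K := \matrix_(i, k) ('C(i, k))%:R.
Definition Xmx K : 'M[CC]_K := \matrix_(k, m) ('X^k * ('X + c2%:P) ^+ K)`_m.

Lemma X1_wide K (i : 'I_K) : (('X + 1 : {poly CC}) ^+ i) = \sum_(k < K) 'X^k *+ 'C(i, k).
Proof. rewrite exprD1n (big_ord_widen K (fun k => 'X^k *+ 'C(i, k))) //.
 rewrite big_mkcond /=. apply: eq_bigr => k _. case: ifP => // hk.
 by rewrite bin_small ?mulr0n // ltnNge -ltnS hk. Qed.

Lemma Tmx_ul K : ulsubmx (Tmx K) = Lmx K *m Xmx K.
Proof. apply/matrixP => i m; rewrite !mxE /Tp /= ltn_ord X1_wide mulr_suml coef_sum.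
 apply: eq_bigr => k _. by rewrite mulrnAl (coefMn (R:=CC)) !mxE mulr_natl. Qed.

Lemma det_Lmx K : \det (Lmx K) = 1.
Proof. rewrite det_trig.
 - by apply: big1 => i _; rewrite mxE binn.
 - apply/is_trig_mxP => i k hik. by rewrite mxE bin_small.
Qed.

Lemma det_Xmx K : \det (Xmx K) = c2 ^+ (K * K).
Proof. rewrite -det_tr det_trig.
 - rewrite (eq_bigr (fun _ => c2 ^+ K)).
   + by rewrite prodr_const card_ord -exprM.
   + move=> i _. rewrite !mxE coefXnM ltnn subnn -horner_coef0 horner_exp.
     by rewrite !hornerE.
 - apply/is_trig_mxP => i k hik. by rewrite !mxE coefXnM hik.
Qed.

Lemma det_Tmx K : \det (Tmx K) = c2 ^+ (K * K).
Proof. by rewrite -(submxK (Tmx K)) Tmx_dl det_ublock Tmx_dr Tmx_ul det_mulmx det_Lmx det_Xmx mul1r mulr1. Qed.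


Lemma phi_eq0 z : phi z = 0 -> z = C0.
Proof. move=> h; apply: phi_inj; by rewrite h phi_C0. Qed.

Lemma nz_phi z : phi z != 0 -> nz z.
Proof. move=> h hz. move: h; apply/negP; rewrite negbK; apply/eqP.
 case: z hz => a b /= hz. have [ha hb] : a = 0%R /\ b = 0%R.
 { apply Rplus_sqr_eq_0. exact hz. }
 by rewrite /phi /= ha hb. Qed.

Lemma P1_phi u : P1 u -> [/\ phi u != 0, phi u - 1 != 0 & phi u + 1 != 0].
Proof. move=> /P1_not [h0 [h1 h2]]. split; apply/eqP => e.
 - exact: h0 (phi_eq0 e).
 - apply: h1. apply: phi_eq0. by rewrite phi_sub phi_C1.
 - apply: h2. apply: phi_eq0. by rewrite phi_add phi_C1.
Qed.

Lemma nz_sub1 u : P1 u -> nz (Csub u C1).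
Proof. move=> /P1_phi [_ h _]. apply: nz_phi. by rewrite phi_sub phi_C1. Qed.
Lemma nz_add1 u : P1 u -> nz (Cadd u C1).
Proof. move=> /P1_phi [_ _ h]. apply: nz_phi. by rewrite phi_add phi_C1. Qed.
Lemma nz_den K u : P1 u -> nz (Cmul (Cpow (Csub u C1) K) (Cpow (Cadd u C1) K)).
Proof. move=> /P1_phi [_ h1 h2]. apply: nz_phi.
 by rewrite phi_mul !phi_pow phi_sub phi_add phi_C1 mulf_neq0 // expf_neq0. Qed.

Lemma phi_1C0 : phi (Csub C1 C0) = 1.
Proof. by rewrite phi_sub phi_C1 phi_C0 subr0. Qed.
Lemma phi_1C0' : phi (Cadd C1 C0) = 1.
Proof. by rewrite phi_add phi_C1 phi_C0 addr0. Qed.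
Lemma nz_q1 : nz (Csub C1 C0).
Proof. apply: nz_phi. by rewrite phi_1C0 oner_neq0. Qed.
Lemma nz_q2 : nz (Cadd C1 C0).
Proof. apply: nz_phi. by rewrite phi_1C0' oner_neq0. Qed.
Lemma nz_q3 K : nz (Cmul (Cpow (Csub C1 C0) K) (Cpow (Cadd C1 C0) K)).
Proof. apply: nz_phi. by rewrite phi_mul !phi_pow phi_1C0 phi_1C0' !expr1n mulr1 oner_neq0. Qed.


Lemma qfun0 K t1 t2 m d : qfun K t1 t2 m d C0 = if d == 0%N then C1 else C0.
Proof. have hE : Earg t1 t2 C0 = C0.
 { apply: phi_inj. rewrite /Earg !(phi_add, phi_div, phi_mul, phi_sub, phi_C1, phi_C0). by rewrite !mulr0 !mul0r addr0. }
 apply: phi_inj. rewrite /qfun hE Cexp0.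
 rewrite !(phi_div, phi_mul, phi_pow, phi_C1) phi_1C0 phi_1C0' phi_C0 !expr1n !mul1r divr1.
 rewrite mulr1; case: d => [|d]; first by rewrite expr0 phi_C1. by rewrite expr0n phi_C0.
Qed.


Definition psi (c : CC) : Cx := (complex.Re c, complex.Im c).
Lemma phi_psi c : phi (psi c) = c. Proof. by case: c. Qed.

Definition coefT K i m : Cx := psi ((Tp K i)`_m).

Lemma sizeX1 (c : CC) n : (size (('X + c%:P : {poly CC}) ^+ n) <= n.+1)%N.
Proof. apply: (leq_trans (size_poly_exp_leq _ _)). by rewrite size_XaddC /= mul1n. Qed.

Lemma size_Tp K i : (i < K + K)%N -> (size (Tp K i) <= K + K)%N.
Proof. move=> hi. rewrite /Tp. case: ifP => h;
  [have hh : (i < K)%N by rewrite h | have hh : (K <= i)%N by rewrite leqNgt h].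
 - apply: (leq_trans (size_polyMleq _ _)).
   have s1 := sizeX1 1 i. have s2 := sizeX1 c2 K. rewrite polyC1 in s1.
   apply: leq_trans (_ : _ <= (i.+1 + K.+1).-1)%N _; first by rewrite -!subn1 leq_sub2r // leq_add.
   lia.
 - apply: (leq_trans (size_polyMleq _ _)).
   have s1 := sizeX1 1 (i - K). rewrite polyC1 in s1. rewrite size_polyXn.
   apply: leq_trans (_ : _ <= ((i - K).+1 + K.+1).-1)%N _; first by rewrite -!subn1 leq_sub2r // leq_add.
   lia.
Qed.

Lemma Aint_sum K t1 t2 i j u : (i < K + K)%N -> P1 u ->
  Aint K t1 t2 i j u = Csum (K + K) (fun m => Cmul (coefT K i m) (gfun K t1 t2 m j u)).
Proof. move=> hi /P1_phi [h0 h1 h2]. apply: phi_inj. rewrite phi_Csum.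
 under eq_bigr => m _ do rewrite phi_mul phi_psi /gfun !(phi_div, phi_mul, phi_pow, phi_sub, phi_add, phi_C1).
 set E := phi (weight _ _ _). set v := phi u.
 transitivity ((Tp K i).[v - 1] * (v ^+ j * E / ((v - 1) ^+ K * (v + 1) ^+ K))).
 2: { rewrite (horner_coef_wide _ (size_Tp hi)) mulr_suml. apply: eq_bigr => m _. field.
      by rewrite !expf_neq0. }
 have nA : (v - 1) ^+ K != 0 by rewrite expf_neq0.
 have nB : (v + 1) ^+ K != 0 by rewrite expf_neq0.
 rewrite /Aint /Tp ltb_ltn. case: ifP => hK.
 - rewrite hornerM !horner_exp !hornerD hornerX !hornerC /c2.
   rewrite (_ : v - 1 + 1 = v); last by ring.
   rewrite (_ : v - 1 + 2%:R = v + 1); last by ring.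
   rewrite !(phi_div, phi_mul, phi_pow, phi_sub, phi_C1) -/E -/v plusE exprD. field. by rewrite nA nB.
 - rewrite hornerM horner_exp hornerD hornerX hornerC ?hornerXn ?horner_exp ?hornerX.
   rewrite (_ : v - 1 + 1 = v); last by ring.
   rewrite !(phi_div, phi_mul, phi_pow, phi_add, phi_C1) -/E -/v !plusE exprD. field. by rewrite nA nB.
Qed.


Lemma assemble K t1 t2 (Hc : nat -> nat -> Cx) :
  (forall i j, (i < K + K)%N -> (j < K + K)%N ->
     Amat K t1 t2 i j = Csum (K + K) (fun m => Cmul (coefT K i m) (Hc m j))) ->
  (forall m j, (m + j < (K + K).-1)%N -> Hc m j = C0) ->
  (forall m j, (m + j = (K + K).-1)%N -> Hc m j = C1) ->
  det (K + K) (Amat K t1 t2) = Cpow (RtoC (-2)) (K * K).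
Proof. move=> hA h0 h1. apply: phi_inj. rewrite phi_det.
 have -> : mx_of (K + K) (Amat K t1 t2) = Tmx K *m \matrix_(m < K + K, j < K + K) phi (Hc m j).
 { apply/matrixP => i j. rewrite !mxE hA // phi_Csum. apply: eq_bigr => m _.
   by rewrite phi_mul phi_psi !mxE. }
 rewrite det_mulmx det_Tmx (@anti_det (K + K)).
 - rewrite sgn_double phi_pow RtoC_m2 phi_opp phi_add phi_C1.
   have -> : (1 + 1 : CC) = c2 by rewrite /c2 mulrS mulr1n.
   rewrite mulrC -[in RHS]mulN1r exprMn. congr (_ * _).
   by rewrite -[LHS]signr_odd -[RHS]signr_odd oddM andbb.
 - move=> i j hij. by rewrite mxE h0 // phi_C0.
 - move=> i j hij. by rewrite mxE h1 // phi_C1.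
Qed.


Lemma q_g_P1 K t1 t2 m j d u : (m + j + 1 + d = K + K)%coq_nat -> P1 u ->
  qfun K t1 t2 m d (Cinv u) = Cmul u (gfun K t1 t2 m j u).
Proof. move=> h /P1_phi [h0 h1 h2]. apply: q_g_id => //. Qed.

Lemma Aint_sum' K t1 t2 i j u : (i < K + K)%coq_nat -> P1 u ->
  Aint K t1 t2 i j u = Csum (K + K) (fun m => Cmul (coefT K i m) (gfun K t1 t2 m j u)).
Proof. move=> /ltP h hu. exact: Aint_sum. Qed.

Lemma qfun0_0 K t1 t2 m : qfun K t1 t2 m 0 C0 = C1.
Proof. by rewrite qfun0. Qed.
Lemma qfun0_S K t1 t2 m d : qfun K t1 t2 m (S d) C0 = C0.
Proof. by rewrite qfun0. Qed.

Lemma assemble' K t1 t2 (Hc : nat -> nat -> Cx) :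
  (forall i j, (i < K + K)%coq_nat -> (j < K + K)%coq_nat ->
     Amat K t1 t2 i j = Csum (K + K) (fun m => Cmul (coefT K i m) (Hc m j))) ->
  (forall m j, (m + j < Nat.pred (K + K))%coq_nat -> Hc m j = C0) ->
  (forall m j, (m + j = Nat.pred (K + K))%coq_nat -> Hc m j = C1) ->
  det (K + K) (Amat K t1 t2) = Cpow (RtoC (-2)) (K * K).
Proof. move=> hA h0 h1. apply: assemble.
 - move=> i j /ltP hi /ltP hj. exact: hA.
 - move=> m j /ltP h. exact: h0.
 - move=> m j h. exact: h1.
Qed.

End MC.

Module AN.
Import Coquelicot.Coquelicot.
Import Defs.
Import MC.
Notation CRInt := Coquelicot.RInt.RInt.
Local Open Scope R_scope.


Definition cc {U : UniformSpace} (f : U -> Cx) (x : U) :=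
  continuous (fun y => fst (f y)) x /\ continuous (fun y => snd (f y)) x.

Lemma cc_const {U : UniformSpace} (c : Cx) (x : U) : cc (fun _ => c) x.
Proof. split; apply continuous_const. Qed.

Lemma cc_id (x : Cx) : cc (U := prod_UniformSpace R_UniformSpace R_UniformSpace) (fun y => y) x.
Proof. destruct x; split; [apply continuous_fst | apply continuous_snd]. Qed.

Lemma cc_add {U : UniformSpace} (f g : U -> Cx) x : cc f x -> cc g x -> cc (fun y => Cadd (f y) (g y)) x.
Proof. intros [? ?] [? ?]; split; simpl; apply (continuous_plus (V:=R_NormedModule)); auto. Qed.

Lemma cc_opp {U : UniformSpace} (f : U -> Cx) x : cc f x -> cc (fun y => Copp (f y)) x.
Proof. intros [? ?]; split; simpl; apply (continuous_opp (V:=R_NormedModule)); auto. Qed.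

Lemma cc_sub {U : UniformSpace} (f g : U -> Cx) x : cc f x -> cc g x -> cc (fun y => Csub (f y) (g y)) x.
Proof. intros; apply cc_add; auto; apply cc_opp; auto. Qed.

Lemma cont_mul {U : UniformSpace} (f g : U -> R) x : continuous f x -> continuous g x ->
  continuous (fun y => f y * g y) x.
Proof. intros; apply (continuous_mult (K:=R_AbsRing)); auto. Qed.
Lemma cont_plus {U : UniformSpace} (f g : U -> R) x : continuous f x -> continuous g x ->
  continuous (fun y => f y + g y) x.
Proof. intros; apply (continuous_plus (V:=R_NormedModule)); auto. Qed.
Lemma cont_minus {U : UniformSpace} (f g : U -> R) x : continuous f x -> continuous g x ->
  continuous (fun y => f y - g y) x.
Proof. intros; apply (continuous_minus (V:=R_NormedModule)); auto. Qed.
Lemma cont_opp {U : UniformSpace} (f : U -> R) x : continuous f x ->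
  continuous (fun y => - f y) x.
Proof. intros; apply (continuous_opp (V:=R_NormedModule)); auto. Qed.
Lemma cont_comp1 {U : UniformSpace} (f : U -> R) (g : R -> R) x : continuous f x -> continuous g (f x) ->
  continuous (fun y => g (f y)) x.
Proof. intros; apply (continuous_comp f g); auto. Qed.
Lemma cont_div {U : UniformSpace} (f g : U -> R) x : continuous f x -> continuous g x -> g x <> 0 ->
  continuous (fun y => f y / g y) x.
Proof. intros; unfold Rdiv; apply cont_mul; auto.
  apply (cont_comp1 g (fun z => / z)); auto. apply continuous_Rinv; auto. Qed.

Lemma cc_mul {U : UniformSpace} (f g : U -> Cx) x : cc f x -> cc g x -> cc (fun y => Cmul (f y) (g y)) x.
Proof. intros [? ?] [? ?]; split; simpl.
 apply cont_minus; apply cont_mul; auto.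
 apply cont_plus; apply cont_mul; auto. Qed.


Lemma cc_inv {U : UniformSpace} (f : U -> Cx) x : cc f x -> nz (f x) -> cc (fun y => Cinv (f y)) x.
Proof. intros [H H0] Hn.
 assert (Hd : continuous (fun y => fst (f y) * fst (f y) + snd (f y) * snd (f y)) x).
 { apply cont_plus; apply cont_mul; auto. }
 split; unfold Cinv; cbv zeta; cbn [fst snd].
 - exact (cont_div (fun y => fst (f y)) _ x H Hd Hn).
 - exact (cont_div (fun y => - snd (f y)) _ x (cont_opp _ x H0) Hd Hn).
Qed.

Lemma cc_div {U : UniformSpace} (f g : U -> Cx) x : cc f x -> cc g x -> nz (g x) -> cc (fun y => Cdiv (f y) (g y)) x.
Proof. intros; unfold Cdiv; apply cc_mul; auto; apply cc_inv; auto. Qed.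

Lemma cc_exp {U : UniformSpace} (f : U -> Cx) x : cc f x -> cc (fun y => Cexp (f y)) x.
Proof. intros [? ?]; split; simpl; apply cont_mul.
 apply (cont_comp1 _ exp); auto; apply continuous_exp.
 apply (cont_comp1 _ cos); auto; apply continuous_cos.
 apply (cont_comp1 _ exp); auto; apply continuous_exp.
 apply (cont_comp1 _ sin); auto; apply continuous_sin. Qed.

Lemma cc_pow {U : UniformSpace} (f : U -> Cx) x n : cc f x -> cc (fun y => Cpow (f y) n) x.
Proof. intros H; induction n; simpl. apply cc_const. apply cc_mul; auto. Qed.

Lemma cc_comp {U : UniformSpace} (f : U -> Cx) (G : Cx -> Cx) x :
  cc f x -> cc (U := prod_UniformSpace R_UniformSpace R_UniformSpace) G (f x) -> cc (fun y => G (f y)) x.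
Proof. intros [H1 H2] [G1 G2]; split.
 - apply (continuous_ext (fun y => fst (G (fst (f y), snd (f y))))).
   { intro y; rewrite <- surjective_pairing; reflexivity. }
   apply (continuous_comp_2 (fun y => fst (f y)) (fun y => snd (f y)) (fun a b => fst (G (a,b)))); auto.
   eapply continuous_ext. 2: rewrite <- surjective_pairing; exact G1.
   intros [a b]; reflexivity.
 - apply (continuous_ext (fun y => snd (G (fst (f y), snd (f y))))).
   { intro y; rewrite <- surjective_pairing; reflexivity. }
   apply (continuous_comp_2 (fun y => fst (f y)) (fun y => snd (f y)) (fun a b => snd (G (a,b)))); auto.
   eapply continuous_ext. 2: rewrite <- surjective_pairing; exact G2.
   intros [a b]; reflexivity.
Qed.


Definition hasD (f : R -> Cx) (x : R) (d : Cx) :=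
  is_derive (fun t => fst (f t)) x (fst d) /\ is_derive (fun t => snd (f t)) x (snd d).

Lemma isd_val (f : R -> R) x l l' : is_derive f x l -> l = l' -> is_derive f x l'.
Proof. intros H ->; exact H. Qed.
Lemma isd_mul (f g : R -> R) x df dg : is_derive f x df -> is_derive g x dg ->
  is_derive (fun t => f t * g t) x (df * g x + f x * dg).
Proof. intros; apply (is_derive_mult (K:=R_AbsRing)); auto. intros; apply Rmult_comm. Qed.
Lemma isd_plus (f g : R -> R) x df dg : is_derive f x df -> is_derive g x dg ->
  is_derive (fun t => f t + g t) x (df + dg).
Proof. intros; apply (is_derive_plus (V:=R_NormedModule)); auto. Qed.
Lemma isd_minus (f g : R -> R) x df dg : is_derive f x df -> is_derive g x dg ->
  is_derive (fun t => f t - g t) x (df - dg).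
Proof. intros; apply (is_derive_minus (V:=R_NormedModule)); auto. Qed.
Lemma isd_opp (f : R -> R) x df : is_derive f x df ->
  is_derive (fun t => - f t) x (- df).
Proof. intros; apply (is_derive_opp (V:=R_NormedModule)); auto. Qed.
Lemma isd_const (c x : R) : is_derive (fun _ => c) x 0.
Proof. apply (is_derive_const (V:=R_NormedModule)). Qed.
Lemma isd_comp (f g : R -> R) x df dg : is_derive g x dg -> is_derive f (g x) df ->
  is_derive (fun t => f (g t)) x (dg * df).
Proof. intros; apply (is_derive_comp (V:=R_NormedModule)); auto. Qed.

Lemma hasD_const (c : Cx) x : hasD (fun _ => c) x C0.
Proof. split; apply isd_const. Qed.

Lemma hasD_add f g x df dg : hasD f x df -> hasD g x dg -> hasD (fun t => Cadd (f t) (g t)) x (Cadd df dg).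
Proof. intros [? ?] [? ?]; split; simpl; apply isd_plus; auto. Qed.

Lemma hasD_opp f x df : hasD f x df -> hasD (fun t => Copp (f t)) x (Copp df).
Proof. intros [? ?]; split; simpl; apply isd_opp; auto. Qed.

Lemma hasD_sub f g x df dg : hasD f x df -> hasD g x dg -> hasD (fun t => Csub (f t) (g t)) x (Csub df dg).
Proof. intros; apply hasD_add; auto; apply hasD_opp; auto. Qed.

Lemma hasD_mul f g x df dg : hasD f x df -> hasD g x dg ->
  hasD (fun t => Cmul (f t) (g t)) x (Cadd (Cmul df (g x)) (Cmul (f x) dg)).
Proof. intros [H1 H2] [G1 G2]; split; simpl.
 - eapply isd_val; [apply isd_minus; apply isd_mul; eauto | simpl; ring].
 - eapply isd_val; [apply isd_plus; apply isd_mul; eauto | simpl; ring].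
Qed.

Lemma hasD_inv f x df : hasD f x df -> nz (f x) ->
  hasD (fun t => Cinv (f t)) x (Copp (Cmul (Cmul (Cinv (f x)) (Cinv (f x))) df)).
Proof. intros [H1 H2] Hn; unfold nz in Hn.
 assert (Hd : is_derive (fun t => fst (f t) * fst (f t) + snd (f t) * snd (f t)) x
    ((fst df * fst (f x) + fst (f x) * fst df) + (snd df * snd (f x) + snd (f x) * snd df))).
 { apply isd_plus; apply isd_mul; auto. }
 split; unfold Cinv; cbv zeta; cbn [fst snd].
 - eapply isd_val; [apply is_derive_div; [exact H1 | exact Hd | exact Hn] | simpl; field; auto].
 - eapply isd_val; [apply is_derive_div; [apply isd_opp; exact H2 | exact Hd | exact Hn] | simpl; field; auto].
Qed.

Lemma hasD_exp f x df : hasD f x df -> hasD (fun t => Cexp (f t)) x (Cmul (Cexp (f x)) df).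
Proof. intros [H1 H2]; split; unfold Cexp; cbn [fst snd].
 - eapply isd_val. apply isd_mul.
   apply (isd_comp exp); [exact H1 | apply is_derive_Reals, derivable_pt_lim_exp].
   apply (isd_comp cos); [exact H2 | apply is_derive_Reals, derivable_pt_lim_cos].
   simpl; ring.
 - eapply isd_val. apply isd_mul.
   apply (isd_comp exp); [exact H1 | apply is_derive_Reals, derivable_pt_lim_exp].
   apply (isd_comp sin); [exact H2 | apply is_derive_Reals, derivable_pt_lim_sin].
   simpl; ring.
Qed.

(* curve-derivative of functions Cx -> Cx on a domain *)
Definition cd (G G' : Cx -> Cx) (P : Cx -> Prop) :=
  forall (g : R -> Cx) x d, P (g x) -> hasD g x d -> hasD (fun t => G (g t)) x (Cmul (G' (g x)) d).

Definition ccP (G : Cx -> Cx) (P : Cx -> Prop) :=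
  forall u, P u -> cc (U := prod_UniformSpace R_UniformSpace R_UniformSpace) G u.

Definition nice (G : Cx -> Cx) (P : Cx -> Prop) :=
  ccP G P /\ exists G', ccP G' P /\ cd G G' P.

Lemma hasD_ext f g x d : (forall t, f t = g t) -> hasD f x d -> hasD g x d.
Proof. intros E [? ?]; split; eapply is_derive_ext; try eassumption; intro t; simpl; rewrite E; reflexivity. Qed.

Lemma hasD_val f x d d' : hasD f x d -> d = d' -> hasD f x d'.
Proof. intros H ->; exact H. Qed.

Lemma Cx_eq (a b : Cx) : fst a = fst b -> snd a = snd b -> a = b.
Proof. destruct a, b; simpl; intros -> ->; reflexivity. Qed.

Lemma nice_const c P : nice (fun _ => c) P.
Proof. split. intros u _; apply cc_const. exists (fun _ => C0); split.
 intros u _; apply cc_const.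
 intros g x d _ _. eapply hasD_val. apply hasD_const. apply Cx_eq; simpl; ring. Qed.

Lemma nice_id P : nice (fun u => u) P.
Proof. split. intros u _; apply cc_id. exists (fun _ => C1); split.
 intros u _; apply cc_const.
 intros g x d _ H. eapply hasD_val. exact H. apply Cx_eq; simpl; ring. Qed.

Lemma nice_add F G P : nice F P -> nice G P -> nice (fun u => Cadd (F u) (G u)) P.
Proof. intros [Fc [F' [F'c Fd]]] [Gc [G' [G'c Gd]]]; split.
 intros u Hu; apply cc_add; auto.
 exists (fun u => Cadd (F' u) (G' u)); split.
 intros u Hu; apply cc_add; auto.
 intros g x d Hp Hg. eapply hasD_val. apply hasD_add; [apply Fd | apply Gd]; eauto.
 apply Cx_eq; simpl; ring. Qed.

Lemma nice_opp F P : nice F P -> nice (fun u => Copp (F u)) P.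
Proof. intros [Fc [F' [F'c Fd]]]; split.
 intros u Hu; apply cc_opp; auto.
 exists (fun u => Copp (F' u)); split.
 intros u Hu; apply cc_opp; auto.
 intros g x d Hp Hg. eapply hasD_val. apply hasD_opp; apply Fd; eauto.
 apply Cx_eq; simpl; ring. Qed.

Lemma nice_sub F G P : nice F P -> nice G P -> nice (fun u => Csub (F u) (G u)) P.
Proof. intros; unfold Csub; apply nice_add; auto; apply nice_opp; auto. Qed.

Lemma nice_mul F G P : nice F P -> nice G P -> nice (fun u => Cmul (F u) (G u)) P.
Proof. intros [Fc [F' [F'c Fd]]] [Gc [G' [G'c Gd]]]; split.
 intros u Hu; apply cc_mul; auto.
 exists (fun u => Cadd (Cmul (F' u) (G u)) (Cmul (F u) (G' u))); split.
 intros u Hu; apply cc_add; apply cc_mul; auto.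
 intros g x d Hp Hg. eapply hasD_val. apply hasD_mul; [apply Fd | apply Gd]; eauto.
 apply Cx_eq; simpl; ring. Qed.

Lemma nice_inv F P : nice F P -> (forall u, P u -> nz (F u)) -> nice (fun u => Cinv (F u)) P.
Proof. intros [Fc [F' [F'c Fd]]] Hn; split.
 intros u Hu; apply cc_inv; auto.
 exists (fun u => Copp (Cmul (Cmul (Cinv (F u)) (Cinv (F u))) (F' u))); split.
 intros u Hu; apply cc_opp; apply cc_mul; auto; apply cc_mul; apply cc_inv; auto.
 intros g x d Hp Hg. eapply hasD_val. apply hasD_inv. apply Fd; eauto. auto.
 apply Cx_eq; simpl; ring. Qed.

Lemma nice_div F G P : nice F P -> nice G P -> (forall u, P u -> nz (G u)) -> nice (fun u => Cdiv (F u) (G u)) P.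
Proof. intros; unfold Cdiv; apply nice_mul; auto; apply nice_inv; auto. Qed.

Lemma nice_exp F P : nice F P -> nice (fun u => Cexp (F u)) P.
Proof. intros [Fc [F' [F'c Fd]]]; split.
 intros u Hu; apply cc_exp; auto.
 exists (fun u => Cmul (Cexp (F u)) (F' u)); split.
 intros u Hu; apply cc_mul; auto; apply cc_exp; auto.
 intros g x d Hp Hg. eapply hasD_val. apply hasD_exp; apply Fd; eauto.
 apply Cx_eq; simpl; ring. Qed.

Lemma nice_pow F P n : nice F P -> nice (fun u => Cpow (F u) n) P.
Proof. intros H; induction n; simpl. apply nice_const. apply nice_mul; auto. Qed.


Lemma locally_interval a b x : a < x < b -> locally x (fun y => a < y < b).
Proof. intros [H1 H2].
 assert (He : 0 < Rmin (x - a) (b - x)) by (apply Rmin_glb_lt; lra).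
 exists (mkposreal _ He); intros y Hy.
 change (Rabs (y - x) < Rmin (x - a) (b - x)) in Hy.
 pose proof (Rmin_l (x - a) (b - x)); pose proof (Rmin_r (x - a) (b - x)).
 apply Rabs_def2 in Hy; lra.
Qed.

Lemma RInt_eq (f : R -> R) a b : ex_RInt f a b -> Defs.RInt f a b = CRInt f a b.
Proof. intros H. unfold Defs.RInt.
 destruct (excluded_middle_informative _) as [h|h].
 - rewrite (RInt_Reals f a b (epsilon h (fun _ => True))). reflexivity.
 - exfalso; apply h; constructor; apply ex_RInt_Reals_0; exact H.
Qed.

Definition Uc (s th : R) : Cx := (cos th / s, sin th / s).
Definition dUs (s th : R) : Cx := (- cos th / (s * s), - sin th / (s * s)).
Definition dUt (s th : R) : Cx := (- sin th / s, cos th / s).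

Lemma hasD_Us s th : s <> 0 -> hasD (fun s => Uc s th) s (dUs s th).
Proof. intros Hs; split; unfold Uc, dUs; simpl.
 - auto_derive; auto. field; auto.
 - auto_derive; auto. field; auto. Qed.

Lemma hasD_Ut s th : s <> 0 -> hasD (fun th => Uc s th) th (dUt s th).
Proof. intros Hs; split; unfold Uc, dUt; simpl.
 - auto_derive; auto. field; auto.
 - auto_derive; auto. field; auto. Qed.


Lemma P1_Uc s th : 0 < s < 1 -> P1 (Uc s th).
Proof. intros Hs; unfold P1, Uc; simpl.
 replace (cos th / s * (cos th / s) + sin th / s * (sin th / s)) with ((Rsqr (sin th) + Rsqr (cos th)) / (s * s)) by (unfold Rsqr; field; lra).
 rewrite sin2_cos2. assert (0 < s * s < 1) by nra.
 replace 1 with ((s*s)/(s*s)) at 1 by (field; lra).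
 unfold Rdiv; apply Rmult_lt_compat_r; [apply Rinv_0_lt_compat; lra | lra]. Qed.

Lemma cont_fst2 (z : R * R) : continuous (U:=R_UniformSpace) (fun p : R*R => fst p) z.
Proof. destruct z; apply continuous_fst. Qed.
Lemma cont_snd2 (z : R * R) : continuous (U:=R_UniformSpace) (fun p : R*R => snd p) z.
Proof. destruct z; apply continuous_snd. Qed.

Lemma cc_Uc2 (z : R * R) : fst z <> 0 -> cc (fun p : R * R => Uc (fst p) (snd p)) z.
Proof. intros Hz; split; unfold Uc; simpl.
 - apply cont_div; auto. apply (cont_comp1 _ cos). apply cont_snd2. apply continuous_cos. apply cont_fst2.
 - apply cont_div; auto. apply (cont_comp1 _ sin). apply cont_snd2. apply continuous_sin. apply cont_fst2.
Qed.
Lemma cc_dUs2 (z : R * R) : fst z <> 0 -> cc (fun p : R * R => dUs (fst p) (snd p)) z.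
Proof. intros Hz; split; unfold dUs; simpl.
 - apply (cont_div (fun p : R*R => - cos (snd p)) (fun p : R*R => fst p * fst p)).
   + apply cont_opp. apply (cont_comp1 _ cos). apply cont_snd2. apply continuous_cos.
   + apply cont_mul; apply cont_fst2.
   + apply Rmult_integral_contrapositive; auto.
 - apply (cont_div (fun p : R*R => - sin (snd p)) (fun p : R*R => fst p * fst p)).
   + apply cont_opp. apply (cont_comp1 _ sin). apply cont_snd2. apply continuous_sin.
   + apply cont_mul; apply cont_fst2.
   + apply Rmult_integral_contrapositive; auto.
Qed.
Lemma cont_idR (x : R) : continuous (U:=R_UniformSpace) (fun y : R => y) x.
Proof. apply continuous_id. Qed.
Lemma cc_Uc1 s (th : R) : s <> 0 -> cc (U:=R_UniformSpace) (fun t => Uc s t) th.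
Proof. intros Hz; split; unfold Uc; simpl.
 - apply cont_div; auto. apply (cont_comp1 _ cos). apply cont_idR. apply continuous_cos. apply continuous_const.
 - apply cont_div; auto. apply (cont_comp1 _ sin). apply cont_idR. apply continuous_sin. apply continuous_const.
Qed.
Lemma cc_dUt1 s (th : R) : s <> 0 -> cc (U:=R_UniformSpace) (fun t => dUt s t) th.
Proof. intros Hz; split; unfold dUt; simpl.
 - apply cont_div; auto. apply cont_opp. apply (cont_comp1 _ sin). apply cont_idR. apply continuous_sin. apply continuous_const.
 - apply cont_div; auto. apply (cont_comp1 _ cos). apply cont_idR. apply continuous_cos. apply continuous_const.
Qed.


Definition isPr (pr : Cx -> R) := pr = fst \/ pr = snd.

Lemma hasD_pr pr f x d : isPr pr -> hasD f x d -> is_derive (fun t => pr (f t)) x (pr d).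
Proof. intros [-> | ->] [? ?]; auto. Qed.
Lemma cc_pr {U : UniformSpace} pr (f : U -> Cx) x : isPr pr -> cc f x -> continuous (fun y => pr (f y)) x.
Proof. intros [-> | ->] [? ?]; auto. Qed.

Lemma locally_fst (s0 t : R) (P : R -> Prop) : locally s0 P -> locally (s0, t) (fun z : R * R => P (fst z)).
Proof. intros H. apply (cont_fst2 (s0, t)). exact H. Qed.

Section Deriv0.
Variables (h h' : Cx -> Cx) (Hc : ccP h P1) (Hc' : ccP h' P1) (Hd : cd h h' P1).
Variable pr : Cx -> R.
Hypothesis Hpr : isPr pr.

Let f := fun s th => pr (h (Uc s th)).
Let E := fun s th => pr (Cmul (h' (Uc s th)) (dUs s th)).

Lemma D1 s th : 0 < s < 1 -> is_derive (fun u => f u th) s (E s th).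
Proof. intros Hs. unfold f, E.
 apply (hasD_pr pr (fun u => h (Uc u th))); auto.
 apply (Hd (fun u => Uc u th)). apply P1_Uc; auto. apply hasD_Us; lra. Qed.

Lemma C1 s0 th : 0 < s0 < 1 -> continuous (fun z : R * R => E (fst z) (snd z)) (s0, th).
Proof. intros Hs. unfold E.
 apply (cc_pr pr (fun z : R * R => Cmul (h' (Uc (fst z) (snd z))) (dUs (fst z) (snd z)))); auto.
 apply cc_mul.
 - apply (cc_comp (fun z : R * R => Uc (fst z) (snd z)) h'). apply cc_Uc2; simpl; lra.
   apply Hc'. apply P1_Uc; auto.
 - apply cc_dUs2; simpl; lra.
Qed.

Lemma deriv0 s0 : 0 < s0 < 1 -> is_derive (fun s => CRInt (fun th => f s th) 0 (2 * PI)) s0 0.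
Proof. intros Hs.
 assert (HPI := PI_RGT_0).
 eapply isd_val. apply (is_derive_RInt_param f 0 (2*PI) s0).
 - eapply filter_imp. 2: apply (locally_interval 0 1 s0 Hs).
   intros y Hy t _. exists (E y t). apply D1; auto.
 - intros t _. apply continuity_2d_pt_filterlim.
   change (continuous (fun z : R * R => Derive (fun u => f u (snd z)) (fst z)) (s0, t)).
   apply (continuous_ext_loc _ (fun z : R*R => E (fst z) (snd z))).
   + eapply filter_imp. 2: apply (locally_fst s0 t _ (locally_interval 0 1 s0 Hs)).
     intros z Hz. symmetry. apply is_derive_unique. apply D1; auto.
   + apply C1; auto.
 - eapply filter_imp. 2: apply (locally_interval 0 1 s0 Hs).
   intros y Hy. apply (ex_RInt_continuous (V:=R_CompleteNormedModule)). intros z _. unfold f.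
   apply (cc_pr pr (fun t => h (Uc y t))); auto.
   apply (cc_comp (fun t => Uc y t) h). apply cc_Uc1; lra. apply Hc. apply P1_Uc; auto.
 -
   set (K := (0, 1 / s0) : Cx).
   set (psi := fun t => pr (Cmul K (h (Uc s0 t)))).
   assert (Hpsi : forall t, is_derive psi t (E s0 t)).
   { intro t. unfold psi, E. eapply isd_val.
     apply (hasD_pr pr (fun t => Cmul K (h (Uc s0 t)))); auto.
     apply hasD_mul. apply hasD_const. apply (Hd (fun t => Uc s0 t)). apply P1_Uc; auto. apply hasD_Ut; lra.
     f_equal. unfold K, dUs, dUt; apply Cx_eq; simpl; field; lra. }
   assert (HE : forall t, continuous (E s0) t).
   { intro t. apply (continuous_comp_2 (fun _ => s0) (fun x => x) E).
     apply continuous_const. apply continuous_id. apply C1; auto. }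
   rewrite (RInt_ext _ (E s0)).
   2: { intros x _. apply is_derive_unique. apply D1; auto. }
   pose proof (is_RInt_derive psi (E s0) 0 (2*PI) (fun x _ => Hpsi x) (fun x _ => HE x)) as Hi.
   apply is_RInt_unique in Hi. rewrite Hi. unfold psi, Uc. rewrite cos_2PI, sin_2PI, cos_0, sin_0.
   apply (minus_eq_zero (G:=R_AbelianGroup)).
Qed.
End Deriv0.


Lemma eq_by_eps (x y C : R) : 0 < C -> (forall e, 0 < e -> Rabs (x - y) <= C * e) -> x = y.
Proof. intros HC H. destruct (Req_dec x y) as [|Hn]; auto. exfalso.
 assert (Ha : 0 < Rabs (x - y)) by (apply Rabs_pos_lt; lra).
 specialize (H (Rabs (x - y) / (2 * C))).
 assert (0 < Rabs (x - y) / (2 * C)) by (apply Rdiv_lt_0_compat; lra).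
 specialize (H H0). replace (C * (Rabs (x - y) / (2 * C))) with (Rabs (x - y) / 2) in H by (field; lra).
 lra. Qed.

Lemma Cinv_Uc s th : 0 < s -> Cinv (Uc s th) = (s * cos th, - (s * sin th)).
Proof. intros Hs. unfold Cinv, Uc; simpl.
 assert (E : cos th / s * (cos th / s) + sin th / s * (sin th / s) = 1 / (s * s)).
 { replace (cos th / s * (cos th / s) + sin th / s * (sin th / s)) with ((Rsqr (sin th) + Rsqr (cos th)) / (s * s)) by (unfold Rsqr; field; lra).
   rewrite sin2_cos2; reflexivity. }
 rewrite E. apply Cx_eq; simpl; field; lra. Qed.

Lemma ballR (x y : R) (e : posreal) : Rabs (y - x) < e -> ball x e y.
Proof. intros H; exact H. Qed.

Section AT.
Variables (g q : Cx -> Cx).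
Hypothesis Hg : nice g P1.
Hypothesis Hq : forall u, P1 u -> q (Cinv u) = Cmul u (g u).
Hypothesis Hqc : cc (U := prod_UniformSpace R_UniformSpace R_UniformSpace) q C0.

Let h := fun u => Cmul Ci (Cmul u (g u)).

Lemma h_nice : nice h P1.
Proof. unfold h. apply nice_mul. apply nice_const. apply nice_mul. apply nice_id. exact Hg. Qed.

Lemma F_half pr : isPr pr ->
  CRInt (fun th => pr (h (Uc (1/2) th))) 0 (2 * PI) = 2 * PI * pr (Cmul Ci (q C0)).
Proof. intros Hpr. assert (HPI := PI_RGT_0).
 destruct h_nice as [Hc [h' [Hc' Hd]]].
 set (F := fun s => CRInt (fun th => pr (h (Uc s th))) 0 (2 * PI)).
 assert (Hconst : forall s, 0 < s <= 1/2 -> F s = F (1/2)).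
 { intros s Hs. destruct (Req_dec s (1/2)) as [->|Hne]; auto.
   destruct (MVT_cor2 F (fun _ => 0) s (1/2)) as [c [Hc1 Hc2]]. lra.
   intros c Hc0. apply is_derive_Reals. apply (deriv0 h h' Hc Hc' Hd pr Hpr). lra.
   lra. }
 set (c0 := pr (Cmul Ci (q C0))).
 apply (eq_by_eps _ _ (2 * PI)). lra.
 intros e He.
 assert (Hcont : continuous (fun z => pr (Cmul Ci (q z))) C0).
 { apply (cc_pr pr (fun z => Cmul Ci (q z))); auto. apply cc_mul; auto. apply cc_const. }
 apply filterlim_locally with (eps := mkposreal e He) in Hcont.
 destruct Hcont as [d Hd0].
 set (s := Rmin (d / 2) (1/2)).
 assert (Hs : 0 < s <= 1/2).
 { unfold s; split. apply Rmin_glb_lt. destruct d; simpl; lra. lra. apply Rmin_r. }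
 assert (Hsd : s < d). { unfold s. eapply Rle_lt_trans. apply Rmin_l. destruct d; simpl; lra. }
 change (Rabs (F (1/2) - 2 * PI * c0) <= 2 * PI * e). rewrite <- (Hconst s Hs).
 assert (Hint : ex_RInt (fun th => pr (h (Uc s th))) 0 (2 * PI)).
 { apply (ex_RInt_continuous (V:=R_CompleteNormedModule)). intros z _.
   apply (cc_pr pr (fun t => h (Uc s t))); auto.
   apply (cc_comp (fun t => Uc s t) h). apply cc_Uc1; lra. apply Hc. apply P1_Uc; lra. }
 replace (2 * PI * c0) with (CRInt (fun _ => c0) 0 (2 * PI)).
 2: { rewrite RInt_const. simpl. unfold scal; simpl; unfold mult; simpl; ring. }
 unfold F. rewrite <- (RInt_minus (V:=R_CompleteNormedModule)); auto.
 2: apply ex_RInt_const.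
 replace (2 * PI * e) with ((2 * PI - 0) * e) by ring.
 apply abs_RInt_le_const. lra.
 apply (ex_RInt_minus (V:=R_NormedModule)); auto. apply ex_RInt_const.
 intros t _.
 assert (Hb : ball C0 d (Cinv (Uc s t))).
 { rewrite Cinv_Uc by lra. split; simpl; apply ballR.
   - rewrite Rminus_0_r, Rabs_mult, Rabs_pos_eq by lra.
     pose proof (COS_bound t) as [? ?]. apply Rle_lt_trans with s; auto.
     rewrite <- (Rmult_1_r s) at 2. apply Rmult_le_compat_l. lra. apply Rabs_le; lra.
   - rewrite Rminus_0_r, Rabs_Ropp, Rabs_mult, Rabs_pos_eq by lra.
     pose proof (SIN_bound t) as [? ?]. apply Rle_lt_trans with s; auto.
     rewrite <- (Rmult_1_r s) at 2. apply Rmult_le_compat_l. lra. apply Rabs_le; lra. }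
 specialize (Hd0 _ Hb). change (Rabs (pr (Cmul Ci (q (Cinv (Uc s t)))) - c0) < e) in Hd0.
 rewrite Hq in Hd0 by (apply P1_Uc; lra).
 unfold h. simpl. unfold minus, plus, opp; simpl. unfold Rminus in Hd0. lra.
Qed.

Theorem AT : cauchy_int2 g = q C0.
Proof. assert (HPI := PI_RGT_0).
 destruct h_nice as [Hc _].
 assert (Hint : forall pr, isPr pr -> ex_RInt (fun th => pr (h (Uc (1/2) th))) 0 (2 * PI)).
 { intros pr Hpr. apply (ex_RInt_continuous (V:=R_CompleteNormedModule)). intros z _.
   apply (cc_pr pr (fun t => h (Uc (1/2) t))); auto.
   apply (cc_comp (fun t => Uc (1/2) t) h). apply cc_Uc1; lra. apply Hc. apply P1_Uc; lra. }
 assert (Hext : forall pr, isPr pr -> (fun th => pr (Cmul (g (gam th)) (dgam th))) = (fun th => pr (h (Uc (1/2) th)))).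
 { intros pr Hpr. apply functional_extensionality; intro th.
   replace (Uc (1/2) th) with (gam th) by (unfold Uc, gam; apply Cx_eq; simpl; field).
   f_equal. unfold h, gam, dgam. apply Cx_eq; simpl; ring. }
 unfold cauchy_int2, circle2_integral.
 rewrite (Hext fst), (Hext snd) by (red; auto).
 rewrite !RInt_eq by (apply Hint; red; auto).
 rewrite (F_half fst), (F_half snd) by (red; auto).
 unfold Cdiv, Cinv; apply Cx_eq; simpl; field; lra.
Qed.
End AT.


Lemma P1_gam th : P1 (gam th).
Proof. unfold P1, gam; simpl.
 replace (2 * cos th * (2 * cos th) + 2 * sin th * (2 * sin th)) with (4 * (Rsqr (sin th) + Rsqr (cos th))) by (unfold Rsqr; ring).
 rewrite sin2_cos2; lra. Qed.

Lemma cc_gam (th : R) : cc (U:=R_UniformSpace) gam th.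
Proof. split; unfold gam; simpl; apply cont_mul; try apply continuous_const.
 apply (cont_comp1 _ cos). apply cont_idR. apply continuous_cos.
 apply (cont_comp1 _ sin). apply cont_idR. apply continuous_sin. Qed.
Lemma cc_dgam (th : R) : cc (U:=R_UniformSpace) dgam th.
Proof. split; unfold dgam; simpl; apply cont_mul; try apply continuous_const.
 apply (cont_comp1 _ sin). apply cont_idR. apply continuous_sin.
 apply (cont_comp1 _ cos). apply cont_idR. apply continuous_cos. Qed.

Lemma ex_circ pr F : isPr pr -> ccP F P1 -> ex_RInt (fun th => pr (Cmul (F (gam th)) (dgam th))) 0 (2 * PI).
Proof. intros Hpr HF. apply (ex_RInt_continuous (V:=R_CompleteNormedModule)). intros z _.
 apply (cc_pr pr (fun th => Cmul (F (gam th)) (dgam th))); auto.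
 apply cc_mul. apply (cc_comp gam F). apply cc_gam. apply HF, P1_gam. apply cc_dgam. Qed.

Lemma cint_ext F G : (forall u, P1 u -> F u = G u) -> cauchy_int2 F = cauchy_int2 G.
Proof. intros H. unfold cauchy_int2, circle2_integral.
 assert (E : forall th, F (gam th) = G (gam th)) by (intro; apply H, P1_gam).
 replace (fun th => fst (Cmul (F (gam th)) (dgam th))) with (fun th => fst (Cmul (G (gam th)) (dgam th)))
  by (apply functional_extensionality; intro th; rewrite E; auto).
 replace (fun th => snd (Cmul (F (gam th)) (dgam th))) with (fun th => snd (Cmul (G (gam th)) (dgam th)))
  by (apply functional_extensionality; intro th; rewrite E; auto).
 reflexivity. Qed.

Lemma cint_lin a F G : ccP F P1 -> ccP G P1 ->
  cauchy_int2 (fun u => Cadd (Cmul a (F u)) (G u)) = Cadd (Cmul a (cauchy_int2 F)) (cauchy_int2 G).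
Proof. intros HF HG. unfold cauchy_int2, circle2_integral. cbv zeta.
 set (f1 := fun th => fst (Cmul (F (gam th)) (dgam th))).
 set (f2 := fun th => snd (Cmul (F (gam th)) (dgam th))).
 set (g1 := fun th => fst (Cmul (G (gam th)) (dgam th))).
 set (g2 := fun th => snd (Cmul (G (gam th)) (dgam th))).
 assert (E1 : (fun th => fst (Cmul (Cadd (Cmul a (F (gam th))) (G (gam th))) (dgam th))) =
   (fun th => plus (minus (scal (fst a) (f1 th)) (scal (snd a) (f2 th))) (g1 th))).
 { apply functional_extensionality; intro th. unfold f1, f2, g1, scal, minus, plus, opp; simpl. unfold mult; simpl. ring. }
 assert (E2 : (fun th => snd (Cmul (Cadd (Cmul a (F (gam th))) (G (gam th))) (dgam th))) =
   (fun th => plus (plus (scal (fst a) (f2 th)) (scal (snd a) (f1 th))) (g2 th))).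
 { apply functional_extensionality; intro th. unfold f2, f1, g2, scal, minus, plus, opp; simpl. unfold mult; simpl. ring. }
 assert (I1 : ex_RInt f1 0 (2*PI)) by (apply (ex_circ fst); auto; red; auto).
 assert (I2 : ex_RInt f2 0 (2*PI)) by (apply (ex_circ snd); auto; red; auto).
 assert (J1 : ex_RInt g1 0 (2*PI)) by (apply (ex_circ fst); auto; red; auto).
 assert (J2 : ex_RInt g2 0 (2*PI)) by (apply (ex_circ snd); auto; red; auto).
 rewrite E1, E2.
 assert (Hs1 : ex_RInt (fun th => scal (fst a) (f1 th)) 0 (2*PI)) by (apply (ex_RInt_scal (V:=R_NormedModule)); auto).
 assert (Hs2 : ex_RInt (fun th => scal (snd a) (f2 th)) 0 (2*PI)) by (apply (ex_RInt_scal (V:=R_NormedModule)); auto).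
 assert (Hs3 : ex_RInt (fun th => scal (fst a) (f2 th)) 0 (2*PI)) by (apply (ex_RInt_scal (V:=R_NormedModule)); auto).
 assert (Hs4 : ex_RInt (fun th => scal (snd a) (f1 th)) 0 (2*PI)) by (apply (ex_RInt_scal (V:=R_NormedModule)); auto).
 assert (Hm1 : ex_RInt (fun th => minus (scal (fst a) (f1 th)) (scal (snd a) (f2 th))) 0 (2*PI)) by (apply (ex_RInt_minus (V:=R_NormedModule)); auto).
 assert (Hm2 : ex_RInt (fun th => plus (scal (fst a) (f2 th)) (scal (snd a) (f1 th))) 0 (2*PI)) by (apply (ex_RInt_plus (V:=R_NormedModule)); auto).
 rewrite !RInt_eq; auto.
 2: apply (ex_RInt_plus (V:=R_NormedModule)); auto.
 2: apply (ex_RInt_plus (V:=R_NormedModule)); auto.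
 rewrite !(RInt_plus (V:=R_CompleteNormedModule)); auto.
 rewrite !(RInt_minus (V:=R_CompleteNormedModule)); auto.
 rewrite !(RInt_scal (V:=R_CompleteNormedModule)); auto.
 assert (HPI := PI_RGT_0).
 unfold Cdiv, Cinv, scal, minus, plus, opp; simpl. unfold mult; simpl.
 apply Cx_eq; simpl; field; lra.
Qed.

Lemma ccP_sum (n : nat) (c : nat -> Cx) (F : nat -> Cx -> Cx) :
  (forall k, ccP (F k) P1) -> forall l, ccP (fun u => fold_right Cadd C0 (map (fun k => Cmul (c k) (F k u)) l)) P1.
Proof. intros HF l; induction l; simpl; intros u Hu.
 apply cc_const. apply cc_add. apply cc_mul. apply cc_const. apply HF; auto. apply IHl; auto. Qed.

Lemma cint_sum (c : nat -> Cx) (F : nat -> Cx -> Cx) :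
  (forall k, ccP (F k) P1) -> forall l,
  cauchy_int2 (fun u => fold_right Cadd C0 (map (fun k => Cmul (c k) (F k u)) l)) =
  fold_right Cadd C0 (map (fun k => Cmul (c k) (cauchy_int2 (F k))) l).
Proof. intros HF l; induction l; simpl.
 - assert (HPI := PI_RGT_0).
   unfold cauchy_int2, circle2_integral, Cdiv, Cinv; simpl.
   replace (fun th : R => 0 * (- 2 * sin th) - 0 * (2 * cos th)) with (fun _ : R => 0)
     by (apply functional_extensionality; intro; ring).
   replace (fun th : R => 0 * (2 * cos th) + 0 * (- 2 * sin th)) with (fun _ : R => 0)
     by (apply functional_extensionality; intro; ring).
   rewrite RInt_eq by apply ex_RInt_const. rewrite RInt_const.
   apply Cx_eq; simpl; unfold scal; simpl; unfold mult; simpl; field; lra.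
 - rewrite <- IHl. apply cint_lin. apply HF. apply (ccP_sum 0 c F HF l).
Qed.


Lemma gfun_nice K t1 t2 m j : nice (gfun K t1 t2 m j) P1.
Proof. unfold gfun, weight.
 apply nice_div.
 - apply nice_mul. apply nice_mul.
   + apply nice_pow. apply nice_sub. apply nice_id. apply nice_const.
   + apply nice_pow. apply nice_id.
   + apply nice_exp. apply nice_add.
     * apply nice_div. apply nice_const. apply nice_sub. apply nice_id. apply nice_const. apply nz_sub1.
     * apply nice_div. apply nice_const. apply nice_add. apply nice_id. apply nice_const. apply nz_add1.
 - apply nice_mul; apply nice_pow. apply nice_sub. apply nice_id. apply nice_const.
   apply nice_add. apply nice_id. apply nice_const.
 - apply nz_den.
Qed.

Lemma qfun_cc K t1 t2 m d : cc (U := prod_UniformSpace R_UniformSpace R_UniformSpace) (qfun K t1 t2 m d) C0.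
Proof. unfold qfun, Earg.
 apply cc_div.
 - apply cc_mul. apply cc_mul.
   + apply cc_pow. apply cc_sub. apply cc_const. apply cc_id.
   + apply cc_pow. apply cc_id.
   + apply cc_exp. apply cc_add.
     * apply cc_div. apply cc_mul. apply cc_const. apply cc_id. apply cc_sub. apply cc_const. apply cc_id. apply nz_q1.
     * apply cc_div. apply cc_mul. apply cc_const. apply cc_id. apply cc_add. apply cc_const. apply cc_id. apply nz_q2.
 - apply cc_mul; apply cc_pow. apply cc_sub. apply cc_const. apply cc_id.
   apply cc_add. apply cc_const. apply cc_id.
 - apply nz_q3.
Qed.

Lemma H_val K t1 t2 m j d : (m + j + 1 + d = K + K)%nat ->
  cauchy_int2 (gfun K t1 t2 m j) = qfun K t1 t2 m d C0.
Proof. intros h. apply AT.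
 - apply gfun_nice.
 - intros u hu. apply q_g_P1; auto.
 - apply qfun_cc.
Qed.

Theorem lemma1_main (K : nat) (hK : (1 <= K)%nat) (t1 t2 : Cx) :
  det (2 * K) (Amat K t1 t2) = Cpow (RtoC (-2)) (K * K).
Proof.
 replace (2 * K)%nat with (K + K)%nat by lia.
 apply (@assemble' K t1 t2 (fun m j => cauchy_int2 (gfun K t1 t2 m j))).
 - intros i j hi hj. rewrite Amat_Aint.
   rewrite (cint_ext _ (fun u => Csum (K + K) (fun m => Cmul (coefT K i m) (gfun K t1 t2 m j u)))).
   2: { intros u hu. apply Aint_sum'; auto. }
   unfold Csum. apply (cint_sum (fun m => coefT K i m) (fun m => gfun K t1 t2 m j)).
   intros k. apply (proj1 (gfun_nice K t1 t2 k j)).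
 - intros m j h. destruct (Nat.pred (K + K) - (m + j))%nat as [|d'] eqn:E. lia.
   rewrite (H_val K t1 t2 m j (S d')) by lia. apply qfun0_S.
 - intros m j h. rewrite (H_val K t1 t2 m j 0) by lia. apply qfun0_0.
Qed.

End AN.

Theorem lemma1 (K : nat) (hK : (1 <= K)%nat) (t1 t2 : Cx) :
  det (2 * K) (Amat K t1 t2) = Cpow (RtoC (-2)) (K * K).
Proof. exact (AN.lemma1_main K hK t1 t2). Qed.
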